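(* Let $\lambda$ be a nonzero real number, $x$ a real number with $|\lambda x|<1$, and $p\ge2$ an integer. Then \[ \mathrm{Bel}_{p,\lambda}(x)=\frac{x\,e_{\lambda}^{-1}(x)}{1+\lambda x}\,e_{\lambda}(x,\ 1|1-p)-\frac{\lambda x}{1+\lambda x}\sum_{l=0}^{p-2}\binom{p-1}{l}\mathrm{Bel}_{l+1,\lambda}(x). \]
   Context: For nonzero real $\lambda$: $(1)_{0,\lambda}=1$, $(1)_{n,\lambda}=1(1-\lambda)\cdots(1-(n-1)\lambda)$ for $n\ge1$; $e_\lambda(x)=(1+\lambda x)^{1/\lambda}$ and $e_\lambda^{-1}(x)=(1+\lambda x)^{-1/\lambda}$. For an integer $q\ge1$, $e_{\lambda}(x,\ 1|-q)=\sum_{n=0}^{\infty}\frac{(1)_{n,\lambda}}{n!}(n+1)^{q}x^{n}$. The new type degenerate Bell polynomials $\mathrm{Bel}_{n,\lambda}(x)$ are defined by $e_{\lambda}(xe^{t})\,e_{\lambda}^{-1}(x)=\big(\frac{1+\lambda xe^t}{1+\lambda x}\big)^{1/\lambda}=\sum_{n=0}^{\infty}\mathrm{Bel}_{n,\lambda}(x)\frac{t^{n}}{n!}$. *)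

(* Defs.v *)
From Stdlib Require Import Reals.
From Coquelicot Require Import Coquelicot.
Open Scope R_scope.

Fixpoint dfall (lam : R) (n : nat) : R :=
  match n with
  | O => 1
  | S m => dfall lam m * (1 - INR m * lam)
  end.

Definition e_lam (lam x : R) : R := Rpower (1 + lam * x) (1 / lam).

Definition e_lam_inv (lam x : R) : R := Rpower (1 + lam * x) (- (1 / lam)).

(* e_lambda(x, 1 | -q) = sum_{n>=0} (1)_{n,lambda}/n! (n+1)^q x^n *)
Definition e_lam_poly (lam x : R) (q : nat) : R :=
  Series (fun n => dfall lam n / INR (Factorial.fact n) * (INR n + 1) ^ q * x ^ n).

(* Generating function of the new type degenerate Bell polynomials:
   t |-> e_lambda(x e^t) e_lambda^{-1}(x) = ((1 + lambda x e^t)/(1 + lambda x))^(1/lambda). *)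
Definition bell_gf (lam x : R) (t : R) : R :=
  Rpower ((1 + lam * x * exp t) / (1 + lam * x)) (1 / lam).

(* Bel_{n,lambda}(x) = n-th Taylor coefficient times n!, i.e. the n-th derivative at t = 0. *)
Definition Bel (n : nat) (lam x : R) : R := Derive_n (bell_gf lam x) n 0.

(* Main.v *)
Require Import Defs.
From Stdlib Require Import Reals.
From Coquelicot Require Import Coquelicot.
Open Scope R_scope.
From Stdlib Require Import Lra Lia.

Definition aa (lam : R) (n : nat) : R := dfall lam n / INR (Factorial.fact n).

Lemma aa_rec lam n : aa lam (S n) * INR (S n) = aa lam n * (1 - INR n * lam).
Proof.
  unfold aa. simpl dfall. change (Factorial.fact (S n)) with (S n * Factorial.fact n)%nat.
  rewrite mult_INR. pose proof (INR_fact_neq_0 n). assert (INR (S n) <> 0) by (rewrite S_INR; pose proof (pos_INR n); lra).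
  intros; field; auto.
Qed.

Lemma sum_ge_term (u : nat -> R) : (forall n, 0 <= u n) ->
  forall N k, (k <= N)%nat -> u k <= sum_f_R0 u N.
Proof.
  intros Hu N; induction N as [|N IH]; intros k Hk.
  - assert (k = 0%nat) by lia; subst; simpl; lra.
  - rewrite tech5. destruct (Nat.eq_dec k (S N)) as [->|Hne].
    + pose proof (cond_pos_sum u N Hu). lra.
    + pose proof (IH k ltac:(lia)). pose proof (Hu (S N)). lra.
Qed.

Lemma bounded_of_ratio (u : nat -> R) N : (forall n, 0 <= u n) ->
  (forall n, (N <= n)%nat -> u (S n) <= u n) -> exists M, forall n, u n <= M.
Proof.
  intros Hu Hr. exists (sum_f_R0 u N). intros n.
  destruct (Nat.le_gt_cases n N) as [H|H].
  - now apply sum_ge_term.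
  - assert (forall k, u (N + k)%nat <= u N).
    { induction k. rewrite Nat.add_0_r; lra.
      rewrite Nat.add_succ_r. pose proof (Hr (N + k)%nat ltac:(lia)). lra. }
    replace n with (N + (n - N))%nat by lia. eapply Rle_trans. apply H0.
    apply sum_ge_term; auto.
Qed.

Lemma radius_aa lam y : lam <> 0 -> Rabs (lam * y) < 1 -> Rbar_lt (Rabs y) (CV_radius (aa lam)).
Proof.
  intros Hl Hy.
  assert (Hlp : 0 < Rabs lam) by (apply Rabs_pos_lt; auto).
  rewrite Rabs_mult in Hy.
  set (r := (Rabs y + / Rabs lam) / 2).
  assert (Hyl : Rabs y < / Rabs lam).
  { apply (Rmult_lt_reg_l (Rabs lam)); auto. rewrite Rinv_r; lra. }
  assert (Hr0 : 0 <= r) by (unfold r; pose proof (Rabs_pos y); pose proof (Rinv_0_lt_compat _ Hlp); lra).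
  assert (Hlr : Rabs lam * r < 1).
  { unfold r. assert (Rabs lam * / Rabs lam = 1) by (field; lra). nra. }
  assert (Hyr : Rabs y < r) by (unfold r; lra).
  assert (Hb : Rbar_le r (CV_radius (aa lam))).
  { destruct (CV_radius_bounded (aa lam)) as [Hub _]. apply Hub.
    set (c := 1 - Rabs lam * r).
    destruct (INR_unbounded (r / c)) as [N HN].
    apply (bounded_of_ratio _ N).
    - intros; apply Rabs_pos.
    - intros n Hn.
      pose proof (le_INR _ _ Hn) as HNn.
      pose proof (aa_rec lam n) as Hrec.
      assert (HSn : 0 < INR (S n)) by (rewrite S_INR; pose proof (pos_INR n); lra).
      assert (E : aa lam (S n) = aa lam n * (1 - INR n * lam) / INR (S n)).
      { rewrite <- Hrec. field. lra. }
      rewrite E. simpl pow.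
      replace (aa lam n * (1 - INR n * lam) / INR (S n) * (r * r ^ n))
        with ((aa lam n * r ^ n) * ((1 - INR n * lam) * r / INR (S n))) by (field; lra).
      rewrite Rabs_mult. rewrite <- (Rmult_1_r (Rabs (aa lam n * r ^ n))) at 2.
      apply Rmult_le_compat_l. apply Rabs_pos.
      rewrite Rabs_div; [|lra]. rewrite (Rabs_pos_eq (INR (S n))); [|lra].
      apply (Rmult_le_reg_r (INR (S n))); auto. unfold Rdiv. rewrite Rmult_assoc, Rinv_l; [|lra].
      rewrite Rmult_1_r, Rmult_1_l, Rabs_mult, (Rabs_pos_eq r); auto.
      assert (H1 : Rabs (1 - INR n * lam) <= 1 + INR n * Rabs lam).
      { eapply Rle_trans. apply Rabs_triang. rewrite Rabs_Ropp, Rabs_mult, Rabs_R1, (Rabs_pos_eq (INR n)); [lra|apply pos_INR]. }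
      assert (Hc : 0 < c) by (unfold c; lra).
      assert (HrN : r <= INR n * c).
      { assert (r / c * c = r) by (field; lra). nra. }
      rewrite S_INR. unfold c in HrN. pose proof (pos_INR n). pose proof (Rabs_pos (1 - INR n * lam)). nra. }
  destruct (CV_radius (aa lam)) eqn:E; simpl in *; try lra; auto.
Qed.

Lemma rad_le lam y z : Rabs z <= Rabs y -> Rabs (lam * y) < 1 -> Rabs (lam * z) < 1.
Proof. intros H1 H2. rewrite Rabs_mult in *. pose proof (Rabs_pos lam). nra. Qed.

Lemma aa_ode lam y : lam <> 0 -> Rabs (lam * y) < 1 ->
  (1 + lam * y) * PSeries (PS_derive (aa lam)) y = PSeries (aa lam) y.
Proof.
  intros Hl Hy. pose proof (radius_aa lam y Hl Hy) as Hr.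
  assert (E : PSeries (PS_derive (aa lam)) y =
     PSeries (PS_plus (aa lam) (PS_scal (- lam) (PS_incr_1 (PS_derive (aa lam))))) y).
  { apply PSeries_ext. intros n. unfold PS_plus, PS_scal, PS_derive, PS_incr_1.
    rewrite Rmult_comm, aa_rec. destruct n as [|n].
    - cbn -[INR aa]. unfold plus, scal, zero, mult; cbn -[INR aa]. change (aa lam 0 * (1 - INR 0 * lam) = aa lam 0 + - lam * 0). simpl INR; ring.
    - cbn -[INR aa]. unfold plus, scal, mult; cbn -[INR aa]. change (aa lam (S n) * (1 - INR (S n) * lam) = aa lam (S n) + - lam * (INR (S n) * aa lam (S n))). ring. }
  rewrite PSeries_plus, PSeries_scal, PSeries_incr_1 in E.
  - replace ((1 + lam * y) * PSeries (PS_derive (aa lam)) y) with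
      (PSeries (PS_derive (aa lam)) y + lam * (y * PSeries (PS_derive (aa lam)) y)) by ring.
    rewrite E at 1. ring.
  - now apply CV_radius_inside.
  - apply CV_radius_inside. rewrite CV_radius_scal by (intro; apply Hl; lra). now rewrite CV_radius_incr_1, CV_radius_derive.
Qed.

Lemma binom_series lam y : lam <> 0 -> Rabs (lam * y) < 1 ->
  PSeries (aa lam) y = Rpower (1 + lam * y) (1 / lam).
Proof.
  intros Hl Hy.
  set (g := fun z => PSeries (aa lam) z * exp (- (1/lam) * ln (1 + lam * z))).
  assert (Hpos : forall z, Rabs (lam * z) < 1 -> 0 < 1 + lam * z).
  { intros z Hz. apply Rabs_def2 in Hz. lra. }
  assert (Hd : forall z, Rabs (lam * z) < 1 -> is_derive g z 0).
  { intros z Hz. pose proof (Hpos z Hz) as Hp.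
    pose proof (aa_ode lam z Hl Hz) as Ho.
    pose proof (is_derive_PSeries _ _ (radius_aa lam z Hl Hz)) as Hf.
    assert (He : is_derive (fun z => exp (- (1/lam) * ln (1 + lam * z))) z
                  (exp (- (1/lam) * ln (1 + lam * z)) * (- (1/lam) * (lam / (1 + lam * z))))).
    { auto_derive. lra. field. repeat split; try lra; auto. }
    unfold g. replace 0 with (PSeries (PS_derive (aa lam)) z * exp (- (1/lam) * ln (1 + lam * z)) +
       PSeries (aa lam) z * (exp (- (1/lam) * ln (1 + lam * z)) * (- (1/lam) * (lam / (1 + lam * z))))).
    apply (is_derive_mult (PSeries (aa lam)) (fun z => exp (- (1/lam) * ln (1 + lam * z)))); auto.
    intros; apply Rmult_comm.
    rewrite <- Ho. field. repeat split; try lra; auto. }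
  destruct (MVT_gen g 0 y (fun _ => 0)) as [c [Hc Eq]].
  - intros z Hz. apply Hd. apply (rad_le _ y); auto.
    unfold Rmin, Rmax in Hz; destruct (Rle_dec 0 y); unfold Rabs; destruct (Rcase_abs z); destruct (Rcase_abs y); lra.
  - intros z Hz. apply continuity_pt_filterlim. apply (ex_derive_continuous g).
    eexists. apply Hd. apply (rad_le _ y); auto.
    unfold Rmin, Rmax in Hz; destruct (Rle_dec 0 y); unfold Rabs; destruct (Rcase_abs z); destruct (Rcase_abs y); lra.
  - unfold g in Eq. rewrite PSeries_0, Rmult_0_r, Rplus_0_r, ln_1, Rmult_0_r, exp_0 in Eq.
    assert (A0 : aa lam 0 = 1) by (unfold aa; simpl; field). rewrite A0 in Eq.
    assert (E2 : PSeries (aa lam) y * exp (- (1 / lam) * ln (1 + lam * y)) = 1) by lra.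
    assert (E3 : exp (- (1 / lam) * ln (1 + lam * y)) = / exp ((1/lam) * ln (1 + lam * y)))
      by (rewrite <- exp_Ropp; f_equal; ring).
    rewrite E3 in E2. pose proof (exp_pos ((1/lam) * ln (1 + lam * y))).
    unfold Rpower. apply (Rmult_eq_reg_r (/ exp ((1/lam) * ln (1 + lam * y)))).
    rewrite E2, Rinv_r; lra. apply Rinv_neq_0_compat; lra.
Qed.

Fixpoint bb (lam : R) (k : nat) : nat -> R :=
  match k with O => aa lam | S k => PS_incr_1 (PS_derive (bb lam k)) end.

Lemma bb_radius lam k : CV_radius (bb lam k) = CV_radius (aa lam).
Proof. induction k; simpl; auto. now rewrite CV_radius_incr_1, CV_radius_derive. Qed.

Lemma bb_eq lam k n : bb lam k n = INR n ^ k * aa lam n.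
Proof.
  revert n; induction k; intros n; simpl bb.
  - simpl; ring.
  - destruct n as [|n].
    + simpl. change (@zero R_NormedModule) with 0. simpl. ring.
    + unfold PS_incr_1, PS_derive. rewrite IHk. change (INR (S n) * (INR (S n) ^ k * aa lam (S n)) = INR (S n) ^ S k * aa lam (S n)). simpl. ring.
Qed.

Definition HH lam x k t := PSeries (bb lam k) (x * exp t).

Lemma HH_deriv lam x k t : lam <> 0 -> Rabs (lam * x * exp t) < 1 ->
  is_derive (HH lam x k) t (HH lam x (S k) t).
Proof.
  intros Hl Ht. unfold HH.
  assert (Hr : Rbar_lt (Rabs (x * exp t)) (CV_radius (bb lam k))).
  { rewrite bb_radius. apply radius_aa; auto. now rewrite <- Rmult_assoc. }
  pose proof (is_derive_PSeries _ _ Hr) as Hf.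
  assert (Hg : is_derive (fun t => x * exp t) t (x * exp t)) by (auto_derive; auto; ring).
  pose proof (is_derive_comp (PSeries (bb lam k)) (fun t => x * exp t) t _ _ Hf Hg) as Hc.
  simpl bb. rewrite PSeries_incr_1. exact Hc.
Qed.

Lemma loc_cond lam x t : Rabs (lam * x * exp t) < 1 -> locally t (fun s => Rabs (lam * x * exp s) < 1).
Proof.
  intros Ht.
  set (q := Rabs (lam * x * exp t)) in *.
  assert (Hq0 : 0 <= q) by apply Rabs_pos.
  assert (Hs : forall s, Rabs (lam * x * exp s) = q * exp (s - t)).
  { intros s. unfold q. rewrite !Rabs_mult, (Rabs_pos_eq (exp s)), (Rabs_pos_eq (exp t)) by (left; apply exp_pos).
    replace s with (t + (s - t)) at 1 by ring. rewrite exp_plus. ring. }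
  destruct (Req_dec q 0) as [Hz|Hz].
  - exists (mkposreal 1 Rlt_0_1). intros s _. rewrite Hs, Hz. lra.
  - assert (Hqp : 0 < q) by (destruct Hq0; auto; congruence).
    assert (Hd : 0 < ln (/ q)).
    { rewrite <- ln_1. apply ln_increasing. lra. rewrite <- Rinv_1. apply Rinv_lt_contravar; lra. }
    exists (mkposreal _ Hd). intros s Hb.
    change (Rabs (s - t) < ln (/ q)) in Hb.
    rewrite Hs. apply Rabs_def2 in Hb.
    assert (exp (s - t) < / q).
    { rewrite <- (exp_ln (/ q)). apply exp_increasing. lra. apply Rinv_0_lt_compat; lra. }
    assert (q * / q = 1) by (field; auto).
    nra.
Qed.

Lemma Dn_HH lam x k : lam <> 0 -> forall t, Rabs (lam * x * exp t) < 1 ->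
  Derive_n (HH lam x 0) k t = HH lam x k t.
Proof.
  intros Hl. induction k; intros t Ht.
  - reflexivity.
  - simpl Derive_n. rewrite (Derive_ext_loc _ (HH lam x k)).
    + apply is_derive_unique. now apply HH_deriv.
    + pose proof (loc_cond lam x t Ht) as L. eapply filter_imp; [|exact L].
      intros s Hs. now apply IHk.
Qed.

Lemma Bel_eq lam x k : lam <> 0 -> Rabs (lam * x) < 1 ->
  Bel k lam x = e_lam_inv lam x * PSeries (bb lam k) x.
Proof.
  intros Hl Hx. unfold Bel.
  assert (Hx0 : Rabs (lam * x * exp 0) < 1) by (rewrite exp_0, Rmult_1_r; auto).
  rewrite (Derive_n_ext_loc _ (fun t => e_lam_inv lam x * HH lam x 0 t)).
  - rewrite Derive_n_scal_l, Dn_HH; auto. unfold HH. now rewrite exp_0, Rmult_1_r.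
  - pose proof (loc_cond lam x 0 Hx0) as L. eapply filter_imp; [|exact L].
    intros s Hs. unfold bell_gf, HH, e_lam_inv. simpl bb.
    rewrite binom_series; auto; [|now rewrite <- Rmult_assoc].
    assert (Hv : 0 < 1 + lam * x) by (apply Rabs_def2 in Hx; lra).
    assert (Hu : 0 < 1 + lam * x * exp s) by (apply Rabs_def2 in Hs; lra).
    unfold Rpower. rewrite ln_div by auto. rewrite <- exp_plus. f_equal.
    rewrite Rmult_assoc. ring.
Qed.

Lemma HS lam x k : lam <> 0 -> Rabs (lam * x) < 1 ->
  is_series (fun n => INR n ^ k * aa lam n * x ^ n) (PSeries (bb lam k) x).
Proof.
  intros Hl Hx.
  assert (Hr : Rbar_lt (Rabs x) (CV_radius (bb lam k))) by (rewrite bb_radius; now apply radius_aa).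
  pose proof (PSeries_correct _ _ (CV_radius_inside _ _ Hr)) as H.
  apply is_pseries_R in H. eapply is_series_ext; [|exact H].
  intros n; simpl. rewrite bb_eq. reflexivity.
Qed.

Lemma fin_sum_series (T : nat -> nat -> R) (L c : nat -> R) m :
  (forall l, is_series (T l) (L l)) ->
  is_series (fun n => sum_f_R0 (fun l => c l * T l n) m) (sum_f_R0 (fun l => c l * L l) m).
Proof.
  intros H. induction m.
  - simpl. apply (is_series_scal (c 0%nat) (T 0%nat) (L 0%nat)), H.
  - simpl. apply (is_series_plus _ _ _ _ IHm). apply (is_series_scal (c (S m)) (T (S m)) (L (S m))), H.
Qed.

Theorem mainTheorem14 (lam x : R) (p : nat) :
  lam <> 0 -> Rabs (lam * x) < 1 -> (2 <= p)%nat ->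
  Bel p lam x =
    x * e_lam_inv lam x / (1 + lam * x) * e_lam_poly lam x (p - 1)
    - lam * x / (1 + lam * x)
      * sum_f_R0 (fun l => Binomial.C (p - 1) l * Bel (l + 1) lam x) (p - 2).
Proof.
  intros Hl Hx Hp.
  destruct p as [|[|r]]; [lia|lia|].
  replace (S (S r) - 1)%nat with (S r) by lia. replace (S (S r) - 2)%nat with r by lia.
  set (q := S r).
  set (Sk := fun k => PSeries (bb lam k) x).
  set (e := e_lam_inv lam x).
  assert (Hv : 0 < 1 + lam * x) by (apply Rabs_def2 in Hx; lra).
  assert (S1 : is_series (fun n => aa lam n * (INR n + 1) ^ q * x ^ n)
                 (sum_f_R0 (fun l => Binomial.C q l * Sk l) q)).
  { eapply is_series_ext; [|apply (fin_sum_series (fun l n => INR n ^ l * aa lam n * x ^ n))].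
    - intros n. cbv beta. rewrite binomial.
      replace (aa lam n * _ * x ^ n) with ((aa lam n * x ^ n) * sum_f_R0 (fun i : nat => Binomial.C q i * INR n ^ i * 1 ^ (q - i)) q) by ring.
      rewrite scal_sum. apply sum_eq. intros i _. rewrite pow1. ring.
    - intros l. now apply HS. }
  assert (E1 : e_lam_poly lam x q = sum_f_R0 (fun l => Binomial.C q l * Sk l) q).
  { unfold e_lam_poly. apply is_series_unique. exact S1. }
  assert (S2 : is_series (fun n => aa lam n * INR n * (INR n + 1) ^ q * x ^ n)
                 (sum_f_R0 (fun l => Binomial.C q l * Sk (S l)) q)).
  { eapply is_series_ext; [|apply (fin_sum_series (fun l n => INR n ^ (S l) * aa lam n * x ^ n))].
    - intros n. cbv beta. rewrite binomial.
      replace (aa lam n * INR n * _ * x ^ n) with ((aa lam n * INR n * x ^ n) * sum_f_R0 (fun i : nat => Binomial.C q i * INR n ^ i * 1 ^ (q - i)) q) by ring.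
      rewrite scal_sum. apply sum_eq. intros i _. rewrite pow1. simpl pow. ring.
    - intros l. now apply HS. }
  assert (S3 : is_series (fun n => INR (S n) ^ (S q) * aa lam (S n) * x ^ (S n))
                 (x * e_lam_poly lam x q - lam * x * sum_f_R0 (fun l => Binomial.C q l * Sk (S l)) q)).
  { rewrite E1.
    pose proof (is_series_scal x _ _ S1) as T1.
    pose proof (is_series_scal (lam * x) _ _ S2) as T2.
    pose proof (is_series_minus _ _ _ _ T1 T2) as T3.
    eapply is_series_ext; [|exact T3].
    intros n. change (x * (aa lam n * (INR n + 1) ^ q * x ^ n) - lam * x * (aa lam n * INR n * (INR n + 1) ^ q * x ^ n)
       = INR (S n) ^ S q * aa lam (S n) * x ^ S n).
    pose proof (aa_rec lam n) as Hr. change (INR (S n) ^ S q) with (INR (S n) * INR (S n) ^ q). change (x ^ S n) with (x * x ^ n).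
    replace (INR (S n) * INR (S n) ^ q * aa lam (S n) * (x * x ^ n))
      with (INR (S n) ^ q * (aa lam (S n) * INR (S n)) * (x * x ^ n)) by ring.
    rewrite Hr, S_INR. ring. }
  assert (S4 : is_series (fun n => INR (S n) ^ (S q) * aa lam (S n) * x ^ (S n)) (Sk (S q))).
  { apply (is_series_incr_1 (fun n => INR n ^ (S q) * aa lam n * x ^ n)).
    assert (Z : INR 0 ^ S q * aa lam 0 * x ^ 0 = 0) by (simpl; ring).
    rewrite Z. match goal with |- is_series _ ?L => replace L with (Sk (S q)) end. unfold Sk. apply HS; auto. change (Sk (S q) = Sk (S q) + 0). ring. }
  pose proof (is_series_unique _ _ S3) as U3. pose proof (is_series_unique _ _ S4) as U4.
  rewrite U3 in U4. clear U3.
  rewrite (Bel_eq lam x (S q)) by auto. fold (Sk (S q)). fold e.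
  rewrite (sum_eq _ (fun l => Binomial.C q l * Sk (S l) * e)).
  2:{ intros i _. rewrite Nat.add_1_r, Bel_eq by auto. fold e. unfold Sk. ring. }
  rewrite <- scal_sum.
  assert (T : sum_f_R0 (fun l => Binomial.C q l * Sk (S l)) q = sum_f_R0 (fun l => Binomial.C q l * Sk (S l)) r + Binomial.C q q * Sk (S q)) by apply tech5.
  rewrite T, C_n_n in U4.
  set (A := sum_f_R0 (fun l => Binomial.C q l * Sk (S l)) r) in *.
  set (E := e_lam_poly lam x q) in *.
  assert (Key : (1 + lam * x) * Sk (S q) = x * E - lam * x * A).
  { replace ((1 + lam * x) * Sk (S q)) with (Sk (S q) + lam * x * Sk (S q)) by ring.
    rewrite <- U4 at 1. ring. }
  assert (K2 : Sk (S q) = (x * E - lam * x * A) / (1 + lam * x)).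
  { rewrite <- Key. field. lra. }
  rewrite K2. field. lra.
Qed.
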